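(* For every $T_1,T_2\in\mathcal{T}_n$, if $\pi(T_1)=\pi(T_2)$ in $\mathfrak{S}_{2n-2}$, then $T_1=T_2$.
   Context: A phylogenetic tree is a finite rooted tree (arcs directed away from the root) with no node of outdegree $1$, whose leaves are injectively labeled. $\mathcal{T}_n$ denotes the set of phylogenetic trees with $n$ leaves labeled $1,\dots,n$, up to label-preserving isomorphism. Internal nodes are the non-leaf nodes; $\mathcal{L}(T)$ is the set of leaves. The height of a node is the length of a longest directed path from it to a leaf. The bottom-up ordering of $T=(V,E)\in\mathcal{T}_n$ is the unique injective map $\ell:V\to\{1,\dots,|V|\}$ such that: (a) for a leaf $v$, $\ell(v)$ is its label; (b) if $\mathrm{height}(u)<\mathrm{height}(v)$ then $\ell(u)<\ell(v)$; (c) if $0<\mathrm{height}(u)=\mathrm{height}(v)$ and $\min\{\ell(x): x \text{ child of } u\}<\min\{\ell(x): x\text{ child of } v\}$ then $\ell(u)<\ell(v)$. For a subset $S=\{i_1<\dots<i_k\}$ with $k\ge 2$, $\kappa(S)$ is the cyclic permutation $(i_1,i_2,\dots,i_k)$ sending $i_1\mapsto i_2\mapsto\dots\mapsto i_k\mapsto i_1$. The matching permutation of $T$ is $\pi(T)=\prod_{u\in V\setminus\mathcal{L}(T)}\kappa(\ell(\mathrm{children}(u)))$ (a product of disjoint cycles), regarded as an element of the symmetric group $\mathfrak{S}_{2n-2}$ fixing $|V|,\dots,2n-2$. *)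

(* Defs.v *)
From mathcomp Require Import all_boot.
Set Implicit Arguments. Unset Strict Implicit. Unset Printing Implicit Defensive.

(* A rooted tree on the vertex set 'I_N is given by its parent map
   (arcs directed away from the root: par c = Some u iff (u,c) is an arc). *)
Definition children (N : nat) (par : 'I_N -> option 'I_N) (u : 'I_N) : {set 'I_N} :=
  [set c | par c == Some u].

Definition is_leaf (N : nat) (par : 'I_N -> option 'I_N) (v : 'I_N) : bool :=
  children par v == set0.

(* par describes a finite rooted tree, no node has outdegree 1, and
   leaf : 'I_n -> 'I_N is a bijection from labels onto the leaves
   (label i : 'I_n stands for the paper's label i+1). *)
Definition is_phylo (n N : nat) (par : 'I_N -> option 'I_N) (leaf : 'I_n -> 'I_N) : Prop :=
  [/\ #|[set v | par v == None]| = 1,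
      (forall v : 'I_N, iter N (fun o => obind par o) (Some v) = None),
      (forall u : 'I_N, #|children par u| != 1),
      injective leaf &
      (forall v : 'I_N, is_leaf par v <-> exists i, v = leaf i)].

Record ptree (n : nat) : Type := PTree {
  nv : nat;
  par : 'I_nv -> option 'I_nv;
  leaf : 'I_n -> 'I_nv;
  ptree_ok : is_phylo par leaf }.
Arguments nv {n} _.
Arguments par {n} _ _.
Arguments leaf {n} _ _.

(* label-preserving isomorphism: the paper's equality in T_n *)
Definition ptree_iso (n : nat) (T1 T2 : ptree n) : Prop :=
  exists f : 'I_(nv T1) -> 'I_(nv T2),
    [/\ bijective f,
        (forall v, par T2 (f v) = omap f (par T1 v)) &
        (forall i, f (leaf T1 i) = leaf T2 i)].

(* height = length of a longest directed path to a leaf (fuel N suffices) *)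
Fixpoint hgt_aux (N : nat) (par : 'I_N -> option 'I_N) (k : nat) (v : 'I_N) : nat :=
  match k with
  | 0 => 0
  | k'.+1 => \max_(c in children par v) (hgt_aux par k' c).+1
  end.

Definition height (n : nat) (T : ptree n) (v : 'I_(nv T)) : nat :=
  hgt_aux (par T) (nv T) v.

Definition min_child (n : nat) (T : ptree n) (l : 'I_(nv T) -> nat) (u : 'I_(nv T)) : nat :=
  \big[minn/(nv T).+1]_(c in children (par T) u) l c.

Definition bottom_up (n : nat) (T : ptree n) (l : 'I_(nv T) -> nat) : Prop :=
  [/\ injective l,
      (forall v, 1 <= l v <= nv T),
      (forall i : 'I_n, l (leaf T i) = i.+1),
      (forall u v, height u < height v -> l u < l v) &
      (forall u v, 0 < height u -> height u = height v ->
                   min_child l u < min_child l v -> l u < l v)].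

(* matching permutation pi(T) = prod over internal u of kappa(l(children u)),
   as a function on nat: k = l(v) with parent u is sent to the cyclic successor
   of k in the increasingly sorted list of l(children u); other k are fixed. *)
Definition match_perm (n : nat) (T : ptree n) (l : 'I_(nv T) -> nat) (k : nat) : nat :=
  match [pick v | l v == k] with
  | Some v =>
      match par T v with
      | Some u => next (sort leq [seq l c | c <- enum (children (par T) u)]) k
      | None => k
      end
  | None => k
  end.

(* Main.v *)
Require Import Defs.
From mathcomp Require Import all_boot zify.
Set Implicit Arguments. Unset Strict Implicit. Unset Printing Implicit Defensive.

Lemma iter_next_nth (x : nat) s j : uniq (x :: s) -> j < size (x :: s) ->
  iter j (next (x :: s)) x = nth x (x :: s) j.
Proof.
elim: j => [//|j IH] U Hj.
rewrite iterS IH ?(ltnW Hj) // next_nth mem_nth ?(ltnW Hj) // index_uniq ?(ltnW Hj) //.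
Qed.

Lemma next_orbit (s : seq nat) x y : uniq s -> x \in s -> y \in s ->
  exists i, iter i (next s) x = y.
Proof.
move=> U Hx Hy; case/rot_to: Hx => i s' Hr.
have U' : uniq (x :: s') by rewrite -Hr rot_uniq.
have Hy' : y \in x :: s' by rewrite -Hr mem_rot.
exists (index y (x :: s')).
have -> : iter (index y (x :: s')) (next s) x = iter (index y (x :: s')) (next (x :: s')) x.
  elim: (index _ _) => // k IH; rewrite !iterS IH -Hr (next_rot _ U) //.
by rewrite iter_next_nth ?index_mem ?nth_index.
Qed.

Lemma bigmin_le_seq (I : eqType) (r : seq I) (P : pred I) (F : I -> nat) x c :
  c \in r -> P c -> \big[minn/x]_(i <- r | P i) F i <= F c.
Proof.
elim: r => // a r IH; rewrite inE big_cons => /orP[/eqP<-|Hr] Pc.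
  by rewrite Pc geq_minl.
case: (P a); last exact: IH.
by rewrite geq_min IH // orbT.
Qed.

Lemma bigmin_att (I : eqType) (r : seq I) (P : pred I) (F : I -> nat) x :
  \big[minn/x]_(i <- r | P i) F i = x \/
  exists2 i, P i & F i = \big[minn/x]_(i <- r | P i) F i.
Proof.
elim: r => [|a r IH]; first by left; rewrite big_nil.
rewrite big_cons; case Pa: (P a); last exact: IH.
rewrite /minn; case: ltnP => _; first by right; exists a.
exact: IH.
Qed.

Section Tree.
Variable n : nat.
Variable T : ptree n.
Variable l : 'I_(nv T) -> nat.
Hypothesis Hl : bottom_up l.

Local Notation p := (par T).
Local Notation op := (fun o => obind (par T) o).

Lemma okT : is_phylo (par T) (leaf T). Proof. exact: ptree_ok. Qed.

Lemma l_inj : injective l. Proof. by case: Hl. Qed.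

Lemma iter_none k : iter k op None = None.
Proof. by elim: k => //= k ->. Qed.

Lemma hgt_mono k v : hgt_aux p k v <= hgt_aux p k.+1 v.
Proof.
elim: k v => [|k IH] v //=.
apply/bigmax_leqP => c Hc.
apply: leq_trans (leq_bigmax_cond _ Hc); by rewrite ltnS IH.
Qed.

Lemma max_lt_ex (A : {set 'I_(nv T)}) (F G : 'I_(nv T) -> nat) :
  \max_(c in A) G c < \max_(c in A) F c -> exists2 c, c \in A & G c < F c.
Proof.
move=> H; case: (boolP [exists c in A, G c < F c]) => [/exists_inP[c ? ?]|/exists_inP Hn].
  by exists c.
exfalso; move: H; rewrite ltnNge => /negP; apply; apply/bigmax_leqP => c Hc.
apply: leq_trans (leq_bigmax_cond _ Hc); rewrite leqNgt; apply/negP => Hlt.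
by apply: Hn; exists c.
Qed.

Lemma hgt_grow k v : hgt_aux p k v < hgt_aux p k.+1 v ->
  exists w, iter k.+1 op (Some w) = Some v.
Proof.
elim: k v => [|k IH] v.
  case: (set_0Vmem (children p v)) => [E|[c Hc]].
    by rewrite /= E big_set0.
  by move=> _; exists c; rewrite inE in Hc; rewrite /= (eqP Hc).
move=> H; have [c Hc Hlt] := max_lt_ex H.
rewrite ltnS in Hlt; have [w Hw] := IH _ Hlt.
exists w; rewrite iterS Hw /=; rewrite inE in Hc; exact/eqP.
Qed.

Lemma N_gt0 (v : 'I_(nv T)) : 0 < nv T.
Proof. exact: (leq_ltn_trans (leq0n v) (ltn_ord v)). Qed.

Lemma hgt_stable c : hgt_aux p (nv T) c = hgt_aux p (nv T).-1 c.
Proof.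
have E := prednK (N_gt0 c).
have Hm := hgt_mono (nv T).-1 c.
move: Hm; rewrite leq_eqVlt => /orP[/eqP|]; first by rewrite E.
move/hgt_grow => [w]; rewrite E.
by case: okT => _ H _ _ _; rewrite H.
Qed.

Lemma height_unfold u : height u = \max_(c in children p u) (hgt_aux p (nv T).-1 c).+1.
Proof.
rewrite /height; have E := prednK (N_gt0 u).
by transitivity (hgt_aux p (nv T).-1.+1 u); first by rewrite E.
Qed.

Lemma height_par c u : p c = Some u -> height c < height u.
Proof.
move=> Hcu; rewrite (height_unfold u) /height hgt_stable.
have Hc : c \in children p u by rewrite inE Hcu.
exact: (@leq_bigmax_cond _ _ (fun c => (hgt_aux p (nv T).-1 c).+1) c Hc).
Qed.

Lemma label_par c u : p c = Some u -> l c < l u.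
Proof. case: Hl => _ _ _ Hb _ H; apply: Hb; exact: height_par H. Qed.

Lemma iter_anc j v a : iter j.+1 op (Some v) = Some a -> l v < l a.
Proof.
elim: j v => [|j IH] v.
  rewrite /=; case E: (p v) => [u|] //= [<-]; exact: label_par E.
rewrite iterSr; have -> : op (Some v) = p v by [].
case E: (p v) => [u|]; last by rewrite iter_none.
move/IH => H; exact: ltn_trans (label_par E) H.
Qed.

Lemma root_reach v : exists a j, iter j op (Some v) = Some a /\ p a = None.
Proof.
have : iter (nv T) op (Some v) = None by case: okT => _ H _ _ _; exact: H.
have Gen : forall k v, iter k op (Some v) = None ->
   exists a j, iter j op (Some v) = Some a /\ p a = None.
  elim=> [|k IH] w //.
  rewrite iterSr; have -> : op (Some w) = p w by [].
  case E: (p w) => [u|] H.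
    have [a [j [Hj Ha]]] := IH u H.
    exists a, j.+1; split=> //; rewrite iterSr.
    by have -> : op (Some w) = Some u by rewrite /= E.
  by exists w, 0.
exact: Gen.
Qed.

Lemma root_uniq a b : p a = None -> p b = None -> a = b.
Proof.
case: okT => /eqP/cards1P[r Hr] _ _ _ _ Ha Hb.
have : a \in [set v | p v == None] by rewrite inE Ha.
have : b \in [set v | p v == None] by rewrite inE Hb.
by rewrite Hr !inE => /eqP -> /eqP ->.
Qed.

Lemma exists_root : exists r, p r = None.
Proof.
case: okT => /eqP/cards1P[r Hr] _ _ _ _; exists r.
have : r \in [set v | p v == None] by rewrite Hr set11.
by rewrite inE => /eqP.
Qed.

Lemma root_max r v : p r = None -> v != r -> l v < l r.
Proof.
move=> Hr Hv; have [a [j [Hj Ha]]] := root_reach v.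
have Ear := root_uniq Ha Hr; subst a.
case: j Hj => [[E]|j Hj]; first by rewrite E eqxx in Hv.
exact: iter_anc Hj.
Qed.

Lemma l_range v : 0 < l v <= nv T.
Proof. by case: Hl => _ H _ _ _. Qed.

Lemma l_surj k : 0 < k <= nv T -> exists v, l v = k.
Proof.
move=> Hk.
have U : uniq [seq l v | v <- enum 'I_(nv T)] by rewrite map_inj_uniq ?enum_uniq //; exact: l_inj.
have S : {subset [seq l v | v <- enum 'I_(nv T)] <= iota 1 (nv T)}.
  move=> x /mapP[v _ ->]; rewrite mem_iota; have := l_range v; lia.
have Sz : size (iota 1 (nv T)) <= size [seq l v | v <- enum 'I_(nv T)].
  by rewrite size_iota size_map size_enum_ord.
have [_ E] := uniq_min_size U S Sz.
have : k \in [seq l v | v <- enum 'I_(nv T)].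
  by rewrite E mem_iota; lia.
by case/mapP => v _ ->; exists v.
Qed.

Lemma root_label r : p r = None -> l r = nv T.
Proof.
move=> Hr; have [v Hv] : exists v, l v = nv T by apply: l_surj; rewrite leqnn N_gt0.
case: (eqVneq v r) => [<- //|Hne].
have := root_max Hr Hne; have := l_range r; lia.
Qed.

Lemma nonroot_label v : p v != None -> l v < nv T.
Proof.
move=> Hv; have [r Hr] := exists_root.
have Hne : v != r by apply/eqP => E; rewrite E Hr in Hv.
by rewrite -(root_label Hr); exact: root_max.
Qed.

Lemma label_N_root v : l v = nv T -> p v = None.
Proof.
move=> E; case H: (p v) => [u|] //.
have := nonroot_label (v:=v); rewrite H E ltnn; by move/(_ isT).
Qed.

Lemma leaf_label v : is_leaf p v <-> l v <= n.
Proof.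
case: okT => _ _ _ _ HL; case: Hl => _ _ Hc _ _.
rewrite HL; split.
  by case=> i ->; rewrite Hc.
move=> Hv; have := l_range v; case E: (l v) => [|m] //= _.
have Hm : m < n by rewrite E in Hv; lia.
exists (Ordinal Hm); apply: l_inj; by rewrite Hc E.
Qed.

Lemma internal_child u : ~~ is_leaf p u -> exists c, p c = Some u.
Proof. by case/set0Pn => c; rewrite inE => /eqP; exists c. Qed.

Lemma N_bound : nv T <= (2 * n).-1.
Proof.
have [r Hr] := exists_root.
set L := [set v | is_leaf p v].
have cardL : #|L| = n.
  have -> : L = [set leaf T i | i in 'I_n].
    apply/setP => v; rewrite !inE; case: okT => _ _ _ _ HL.
    apply/idP/imsetP.
      by move/HL=> [i ->]; exists i.
    by move=> [i _ ->]; apply/HL; exists i.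
  by rewrite card_imset ?card_ord //; case: okT.
have cardR : #|[set v | p v != None]| = (nv T).-1.
  have E : [set v | p v != None] = ~: [set v | p v == None] by apply/setP=> v; rewrite !inE.
  have := cardsC [set v | p v == None]; case: okT => -> _ _ _ _; rewrite -E card_ord. lia.
have S1 : \sum_(u : 'I_(nv T)) #|children p u| = #|[set v | p v != None]|.
  transitivity (\sum_(u : 'I_(nv T)) \sum_(c : 'I_(nv T)) (if p c == Some u then 1 else 0)).
    apply: eq_bigr => u _; rewrite -sum1_card big_mkcond /=.
    by apply: eq_bigr => c _; rewrite inE.
  rewrite exchange_big /= -sum1_card [RHS]big_mkcond /=; apply: eq_bigr => c _; rewrite inE.
  case E: (p c) => [q|] /=.
    rewrite (bigD1 q) //= eqxx big1 // => u Hu.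
    by case: eqP => // [[E']]; rewrite E' eqxx in Hu.
  by rewrite big1.
have S2 : 2 * (nv T - n) <= \sum_(u : 'I_(nv T)) #|children p u|.
  rewrite (bigID (fun u => u \in L)) /=.
  apply: leq_trans (leq_addl _ _).
  have -> : \sum_(i | i \notin L) #|children p i| = \sum_(i in ~: L) #|children p i|.
    by apply: eq_bigl => i; rewrite in_setC.
  apply: leq_trans (_ : \sum_(i in ~: L) 2 <= _).
    rewrite sum_nat_const; have := cardsC L; rewrite card_ord cardL; lia.
  apply: leq_sum => u; rewrite !inE => Hu.
  have H0 : 0 < #|children p u| by rewrite card_gt0.
  case: okT => _ _ H1 _ _; have := H1 u; lia.
have := N_gt0 r; lia.
Qed.

Definition sl u := sort leq [seq l c | c <- enum (children p u)].

Lemma pi_v v : match_perm l (l v) = if p v is Some u then next (sl u) (l v) else l v.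
Proof.
rewrite /match_perm; case: pickP => [w /eqP Hw | H]; last by have := H v; rewrite eqxx.
by rewrite (l_inj Hw).
Qed.

Lemma sl_mem u c : p c = Some u -> l c \in sl u.
Proof. by move=> H; rewrite mem_sort; apply: map_f; rewrite mem_enum inE H. Qed.

Lemma sl_memP u x : x \in sl u -> exists c, p c = Some u /\ l c = x.
Proof. by rewrite mem_sort => /mapP[c]; rewrite mem_enum inE => /eqP H ->; exists c. Qed.

Lemma sl_uniq u : uniq (sl u).
Proof. by rewrite sort_uniq map_inj_uniq ?enum_uniq //; exact: l_inj. Qed.

Lemma orbit_of v u : p v = Some u -> forall i, exists c,
  [/\ p c = Some u, iter i (match_perm l) (l v) = l c & iter i (next (sl u)) (l v) = l c].
Proof.
move=> Hv; elim=> [|i [c [Hc H1 H2]]]; first by exists v.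
have Hm : next (sl u) (l c) \in sl u by rewrite mem_next; exact: sl_mem.
have [c' [Hc' E]] := sl_memP Hm.
exists c'; split=> //.
  by rewrite iterS H1 pi_v Hc E.
by rewrite iterS H2 E.
Qed.

Lemma sib_orbit v w u : p v = Some u -> p w = Some u ->
  exists i, iter i (match_perm l) (l v) = l w.
Proof.
move=> Hv Hw; have [i Hi] := next_orbit (sl_uniq u) (sl_mem Hv) (sl_mem Hw).
exists i; have [c [_ H1 H2]] := orbit_of Hv i.
by rewrite H1 -H2 Hi.
Qed.

Lemma orbit_sib v w u i : p v = Some u -> iter i (match_perm l) (l v) = l w -> p w = Some u.
Proof.
move=> Hv; have [c [Hc H1 _]] := orbit_of Hv i; rewrite H1 => /l_inj <- //.
Qed.

End Tree.

Lemma mc_le n (T : ptree n) (l : 'I_(nv T) -> nat) c u :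
  par T c = Some u -> min_child l u <= l c.
Proof.
move=> H; rewrite /min_child; apply: bigmin_le_seq; first exact: mem_index_enum.
by rewrite inE H.
Qed.

Lemma mc_att n (T : ptree n) (l : 'I_(nv T) -> nat) (Hl : bottom_up l) u :
  ~~ is_leaf (par T) u -> exists2 b, par T b = Some u & l b = min_child l u.
Proof.
move=> Hu; have [c0 H0] := internal_child Hu.
case: (bigmin_att (index_enum 'I_(nv T)) (fun c => c \in children (par T) u) l (nv T).+1)
  => [E|[b Hb E]].
  have := mc_le l H0; rewrite /min_child E; have := l_range Hl c0; lia.
by exists b => //; rewrite inE in Hb; exact/eqP.
Qed.

Lemma transfer n (T1 T2 : ptree n) (l1 : 'I_(nv T1) -> nat) (l2 : 'I_(nv T2) -> nat)
  (Hl1 : bottom_up l1)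
  (H : forall k, 1 <= k <= (2 * n - 2)%N -> match_perm l1 k = match_perm l2 k) v u :
  par T1 v = Some u ->
  forall i, iter i (match_perm l1) (l1 v) = iter i (match_perm l2) (l1 v).
Proof.
move=> Hv; elim=> // i IH; rewrite !iterS -IH.
have [c [Hc H1 _]] := orbit_of Hl1 Hv i.
rewrite H1; apply: H.
have := l_range Hl1 c; have := nonroot_label Hl1 (v:=c); rewrite Hc => /(_ isT).
have := N_bound T1; lia.
Qed.

Lemma nv_le n (T1 T2 : ptree n) (l1 : 'I_(nv T1) -> nat) (l2 : 'I_(nv T2) -> nat)
  (Hl1 : bottom_up l1) (Hl2 : bottom_up l2)
  (H : forall k, 1 <= k <= (2 * n - 2)%N -> match_perm l1 k = match_perm l2 k) :
  nv T1 <= nv T2.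
Proof.
rewrite leqNgt; apply/negP => Hlt.
have [r2 Hr2] := exists_root T2.
have Hpos := N_gt0 r2.
have [v Hv] : exists v, l1 v = nv T2 by apply: (l_surj Hl1); lia.
have Hnr : par T1 v != None.
  by apply/eqP => E; have := root_label Hl1 E; lia.
case E: (par T1 v) Hnr => [u|] // _.
have [w Hw Hwv] : exists2 w, par T1 w = Some u & w != v.
  case: (boolP [exists w, (par T1 w == Some u) && (w != v)]) =>
     [/existsP[w /andP[/eqP ? ?]]|/existsP Hn]; first by exists w.
  exfalso.
  have Hsub : children (par T1) u \subset [set v].
    apply/subsetP => w; rewrite !inE => Hw.
    apply/negPn/negP => Hne; apply: Hn; exists w; by rewrite Hw Hne.
  have := subset_leq_card Hsub; rewrite cards1.
  have : 0 < #|children (par T1) u| by rewrite card_gt0; apply/set0Pn; exists v; rewrite inE E.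
  case: (okT T1) => _ _ H1 _ _; have := H1 u; lia.
have [i Hi] := sib_orbit Hl1 E Hw.
rewrite (transfer Hl1 H E) Hv in Hi.
have Hfix : forall j, iter j (match_perm l2) (nv T2) = nv T2.
  elim=> // j IH; rewrite iterS IH.
  by have := pi_v Hl2 r2; rewrite Hr2 (root_label Hl2 Hr2) => ->.
rewrite Hfix -Hv in Hi; move/(l_inj Hl1): Hi => Ewv.
by rewrite Ewv eqxx in Hwv.
Qed.

Theorem proposition1 (n : nat) (T1 T2 : ptree n)
    (l1 : 'I_(nv T1) -> nat) (l2 : 'I_(nv T2) -> nat) :
  bottom_up l1 -> bottom_up l2 ->
  (forall k, 1 <= k <= (2 * n - 2)%N -> match_perm l1 k = match_perm l2 k) ->
  ptree_iso T1 T2.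
Proof.
move=> Hl1 Hl2 H.
have H' : forall k, 1 <= k <= (2 * n - 2)%N -> match_perm l2 k = match_perm l1 k.
  by move=> k /H.
have EN : nv T1 = nv T2.
  by apply/eqP; rewrite eqn_leq (nv_le Hl1 Hl2 H) (nv_le Hl2 Hl1 H').
have [r1 Hr1] := exists_root T1; have [r2 Hr2] := exists_root T2.
pose f (v : 'I_(nv T1)) : 'I_(nv T2) := odflt r2 [pick w | l2 w == l1 v].
pose g (v : 'I_(nv T2)) : 'I_(nv T1) := odflt r1 [pick w | l1 w == l2 v].
have Hf v : l2 (f v) = l1 v.
  rewrite /f; case: pickP => [w /eqP //|Hn].
  have [w Hw] : exists w, l2 w = l1 v by apply: (l_surj Hl2); rewrite -EN; exact: l_range.
  by have := Hn w; rewrite Hw eqxx.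
have Hg v : l1 (g v) = l2 v.
  rewrite /g; case: pickP => [w /eqP //|Hn].
  have [w Hw] : exists w, l1 w = l2 v by apply: (l_surj Hl1); rewrite EN; exact: l_range.
  by have := Hn w; rewrite Hw eqxx.
clearbody f g.
have fK : cancel f g by move=> v; apply: (l_inj Hl1); rewrite Hg Hf.
have gK : cancel g f by move=> v; apply: (l_inj Hl2); rewrite Hf Hg.
have fbij : bijective f := Bijective fK gK.
have finj : injective f := can_inj fK.
have ST : forall c0 u u' c, par T1 c0 = Some u -> par T2 (f c0) = Some u' ->
    (par T1 c = Some u <-> par T2 (f c) = Some u').
  move=> c0 u u' c H0 H0'; split => Hc.
    have [i Hi] := sib_orbit Hl1 H0 Hc.
    rewrite (transfer Hl1 H H0) -(Hf c0) -(Hf c) in Hi.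
    exact (orbit_sib Hl2 H0' Hi).
  have [i Hi] := sib_orbit Hl2 H0' Hc.
  rewrite (transfer Hl2 H' H0') (Hf c0) (Hf c) in Hi.
  have X := orbit_sib Hl1 H0 Hi. exact X.
have RT : forall v, par T1 v = None -> par T2 (f v) = None.
  move=> v Hv; apply: (label_N_root Hl2); rewrite Hf -EN; exact (root_label Hl1 Hv).
have NR : forall v, par T1 v != None -> par T2 (f v) != None.
  move=> v Hv; apply/eqP => E.
  have := root_label Hl2 E; rewrite Hf -EN => /(label_N_root Hl1) E'.
  by rewrite E' in Hv.
have HT : forall u u', (forall c, par T1 c = Some u <-> par T2 (f c) = Some u') ->
    (forall c, par T1 c = Some u -> forall t, hgt_aux (par T1) t c = hgt_aux (par T2) t (f c)) ->
    forall t, hgt_aux (par T1) t u = hgt_aux (par T2) t u'.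
  move=> u u' Hch Hc [|t] //=.
  rewrite [RHS](reindex f) /=; last exact: onW_bij.
  apply: eq_big => c.
    by rewrite !inE; apply/eqP/eqP => /Hch.
  by rewrite inE => /eqP Hcu; rewrite Hc.
have F1 : forall x, hgt_aux (par T2) (nv T1) x = hgt_aux (par T2) (nv T2) x.
  by move=> x; rewrite EN.
have Main : forall m u, l1 u < m ->
    (forall t, hgt_aux (par T1) t u = hgt_aux (par T2) t (f u)) /\
    (forall c, par T1 c = Some u <-> par T2 (f c) = Some (f u)).
  elim=> [u //|m IH] u Hu.
  case: (boolP (is_leaf (par T1) u)) => Hleaf.
    have Hleaf2 : is_leaf (par T2) (f u).
      by apply/(leaf_label Hl2); rewrite Hf; apply/(leaf_label Hl1).
    split.
      by case=> [|t] //=; rewrite (eqP Hleaf) (eqP Hleaf2) !big_set0.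
    move=> c; split => Hc.
      have : c \in children (par T1) u by rewrite inE Hc.
      by rewrite (eqP Hleaf) inE.
    have : f c \in children (par T2) (f u) by rewrite inE Hc.
    by rewrite (eqP Hleaf2) inE.
  have [c0 H0] := internal_child Hleaf.
  have : par T2 (f c0) != None by apply: NR; rewrite H0.
  case E0: (par T2 (f c0)) => [u'|] // _.
  have Hw : f (g u') = u' by rewrite gK.
  move: (g u') Hw => w Hw.
  have Hch : forall c, par T1 c = Some u <-> par T2 (f c) = Some (f w).
    by rewrite Hw => c; exact: (ST _ _ _ c H0 E0).
  have Hhu : forall t, hgt_aux (par T1) t u = hgt_aux (par T2) t (f w).
    apply: (HT _ _ Hch) => c Hc; apply: (IH c _).1.
    have := label_par Hl1 Hc; lia.
  have Ewu : w = u.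
    case: (eqVneq w u) => // Hne; exfalso.
    case: (ltngtP (l1 w) (l1 u)) => Hwu.
    - have := (IH w ltac:(lia)).2 c0; rewrite Hw E0 => [[_ /(_ erefl)]].
      by rewrite H0 => [[E]]; rewrite E eqxx in Hne.
    - have Hleaf2 : ~~ is_leaf (par T2) (f u).
        apply/negP => /(leaf_label Hl2); rewrite Hf => /(leaf_label Hl1) H2.
        by rewrite H2 in Hleaf.
      have [d1 Hd1] := internal_child Hleaf2.
      have Hd1' : par T2 (f (g d1)) = Some (f u) by rewrite gK.
      move: (g d1) Hd1' => c1 Hd1'.
      have : par T1 c1 != None.
        by apply/eqP => E; have := RT _ E; rewrite Hd1'.
      case E1: (par T1 c1) => [w2|] // _.
      have Hch2 : forall c, par T1 c = Some w2 <-> par T2 (f c) = Some (f u).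
        by move=> c; exact: (ST _ _ _ c E1 Hd1').
      have Hw2u : w2 != u.
        apply/eqP => Ew; subst w2.
        have := (Hch2 c0).1 H0; rewrite E0 -Hw => [[/finj E]].
        by rewrite E eqxx in Hne.
      have Hlt2 : l1 u < l1 w2.
        case: (ltngtP (l1 w2) (l1 u)) => // H2.
          have := ((IH w2 ltac:(lia)).2 c1).1 E1; rewrite Hd1' => [[/finj E]].
          by rewrite E eqxx in Hw2u.
        by move/(l_inj Hl1): H2 => E; rewrite E eqxx in Hw2u.
      have Hhw2 : forall t, hgt_aux (par T1) t w2 = hgt_aux (par T2) t (f u).
        apply: (HT _ _ Hch2) => c Hc; apply: (IH c _).1.
        have := label_par Hl2 ((Hch2 c).1 Hc); rewrite !Hf; lia.
      have hu_eq : height u = height (f w) by rewrite /height Hhu F1.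
      have hw2_eq : height w2 = height (f u) by rewrite /height Hhw2 F1.
      case: (Hl1) => _ _ _ Hb1 Hc1; case: (Hl2) => _ _ _ Hb2 Hc2.
      have h1 : height u <= height w2.
        by rewrite leqNgt; apply/negP => /Hb1; lia.
      have h2 : height (f u) <= height (f w).
        by rewrite leqNgt; apply/negP => /Hb2; rewrite !Hf; lia.
      have hpos : 0 < height u by have := height_par H0; lia.
      have m1 : min_child l1 u <= min_child l1 w2.
        rewrite leqNgt; apply/negP => Hlt.
        have := Hc1 w2 u ltac:(lia) ltac:(lia) Hlt; lia.
      have m2 : min_child l2 (f u) <= min_child l2 (f w).
        rewrite leqNgt; apply/negP => Hlt.
        have := Hc2 (f w) (f u) ltac:(lia) ltac:(lia) Hlt; rewrite !Hf; lia.
      have [b Hb Eb] := mc_att Hl1 Hleaf.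
      have [d Hd Ed] := mc_att Hl2 Hleaf2.
      have Hd' : par T2 (f (g d)) = Some (f u) by rewrite gK.
      have Eda : l2 d = l1 (g d) by rewrite -Hf gK.
      move: (g d) Hd' Eda => a Hd' Eda.
      have Ha : par T1 a = Some w2 by apply/(Hch2 a).
      have L1 := mc_le l1 Ha.
      have L2 := mc_le l2 ((Hch b).1 Hb).
      have Eab : l1 a = l1 b by rewrite Hf in L2; lia.
      move/(l_inj Hl1): Eab => Eab; rewrite Eab Hb in Ha.
      by case: Ha => E; rewrite E eqxx in Hw2u.
    - by move/(l_inj Hl1): Hwu => E; rewrite E eqxx in Hne.
  rewrite Ewu in Hch Hhu; split=> //.
have HM u := Main (l1 u).+1 u (ltnSn _).
exists f; split => //.
  move=> v; case E: (par T1 v) => [u|] /=.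
    exact: ((HM u).2 v).1 E.
  exact: RT.
move=> i; apply: (l_inj Hl2); rewrite Hf.
by case: Hl1 => _ _ -> _ _; case: Hl2 => _ _ -> _ _.
Qed.
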